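(* Consider the saddle-point problem $\min_{x_1\in\mathcal{X}_1}\max_{x_2\in\mathcal{X}_2} f(x_1,x_2)$ described in the context, and assume it is coherent. Assume $g$ is $L_g$-Lipschitz, i.e. $\|g(x)-g(x')\|_*\le L_g\|x-x'\|$ for all $x,x'\in\mathcal{X}$. Run the optimistic mirror descent algorithm with exact gradients, $$Y_n = P_{X_n}(-\gamma_n g(X_n)),\qquad X_{n+1} = P_{X_n}(-\gamma_n g(Y_n)),$$ with a step-size sequence $\{\gamma_n\}_n$ satisfying $$0<\lim_{n\to\infty}\gamma_n\le \sup_n \gamma_n < K/L_g.$$ Then $\lim_{n\to\infty} X_n = x^*$ for some $x^*\in\mathcal{X}^*$. Moreover, there exists a sufficiently large $n_0$ such that $D(x^*,X_n)$ decreases monotonically in $n$ for all $n\ge n_0$.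
   Context: Let $\mathcal{V}_i=\mathbb{R}^{d_i}$ ($i=1,2$) be finite-dimensional normed spaces, $\mathcal{X}_i\subset\mathcal{V}_i$ compact convex sets, $\mathcal{X}=\mathcal{X}_1\times\mathcal{X}_2\subset\mathcal{V}=\mathcal{V}_1\times\mathcal{V}_2$ with norm $\|\cdot\|$ and dual norm $\|\cdot\|_*$ on $\mathcal{V}^*$. Let $f:\mathcal{X}\to\mathbb{R}$ be continuously differentiable and $g(x)=(\nabla_{x_1}f(x_1,x_2),-\nabla_{x_2}f(x_1,x_2))\in\mathcal{V}^*$. Let $\mathcal{X}^*$ be the set of solutions (saddle points) of the problem (SP) $\min_{x_1}\max_{x_2} f$. A point $x^*$ solves (SVI) if $\langle g(x^* ),x-x^*\rangle\ge0$ for all $x\in\mathcal{X}$, and satisfies (MVI) if $\langle g(x),x-x^*\rangle\ge 0$ for all $x\in\mathcal{X}$. (SP) is coherent if: (1) every solution of (SVI) solves (SP); (2) there is a solution $p$ of (SP) satisfying (MVI); (3) for some fixed $\epsilon_0>0$, every solution $x^*$ of (SP) satisfies $\langle g(x),x-x^*\rangle\ge0$ for all $x\in\mathcal{X}$ with $D(x^*,x)\le\epsilon_0$. Fix a differentiable function $h$ whose domain contains $\mathcal{X}$, which is $K$-strongly convex in the sense $\langle\nabla h(x)-\nabla h(x'),x-x'\rangle\ge K\|x-x'\|^2$ for all $x,x'\in\mathcal{X}$, and whose gradient is $L_h$-Lipschitz ($\|\nabla h(x)-\nabla h(x')\|_*\le L_h\|x-x'\|$). The Bregman divergence is $D(p,x)=h(p)-h(x)-\langle\nabla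 h(x),p-x\rangle$, and it is assumed to satisfy the Bregman reciprocity condition: $D(p,x_n)\to0$ whenever $x_n\to p$. The prox-mapping is $P_x(y)=\arg\min_{x'\in\mathcal{X}}\{\langle y,x-x'\rangle+D(x',x)\}$ for $y\in\mathcal{V}^*$. *)

(* Defs.v *)
(* R : realType, V = 'rV[R]_(d1 + d2) = V1 x V2
   (x1 = lsubmx x, x2 = rsubmx x).  V* is identified with 'rV[R]_(d1+d2)
   through the standard pairing [pair y x] = sum_i y_i x_i. *)
From HB Require Import structures.
From mathcomp Require Import all_boot all_order all_algebra.
From mathcomp Require Import all_classical all_reals all_analysis.
Set Implicit Arguments. Unset Strict Implicit. Unset Printing Implicit Defensive.
Import Order.TTheory GRing.Theory Num.Theory.
Import numFieldNormedType.Exports.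
Local Open Scope classical_set_scope.
Local Open Scope ring_scope.

Section Defs.
Variable R : realType.

Definition pair (n : nat) (y x : 'rV[R]_n) : R := \sum_(i < n) y 0 i * x 0 i.

Definition is_norm (n : nat) (nrm : 'rV[R]_n -> R) : Prop :=
  [/\ forall x, 0 <= nrm x,
      forall x, nrm x = 0 -> x = 0,
      forall (a : R) x, nrm (a *: x) = `|a| * nrm x &
      forall x y, nrm (x + y) <= nrm x + nrm y].

Definition dnorm (n : nat) (nrm : 'rV[R]_n -> R) (y : 'rV[R]_n) : R :=
  sup [set pair y x | x in [set x | nrm x <= 1]].

Definition prodset (d1 d2 : nat) (X1 : set 'rV[R]_d1) (X2 : set 'rV[R]_d2)
  : set 'rV[R]_(d1 + d2) := [set x | X1 (lsubmx x) /\ X2 (rsubmx x)].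

Definition is_saddle (d1 d2 : nat) (X1 : set 'rV[R]_d1) (X2 : set 'rV[R]_d2)
  (f : 'rV[R]_(d1 + d2) -> R) (xs : 'rV[R]_(d1 + d2)) : Prop :=
  X1 (lsubmx xs) /\ X2 (rsubmx xs) /\
  (forall x1 x2, X1 x1 -> X2 x2 ->
     f (row_mx (lsubmx xs) x2) <= f xs /\ f xs <= f (row_mx x1 (rsubmx xs))).

Definition is_SVI (n : nat) (X : set 'rV[R]_n) (g : 'rV[R]_n -> 'rV[R]_n) xs :=
  X xs /\ forall x, X x -> 0 <= pair (g xs) (x - xs).

Definition is_MVI (n : nat) (X : set 'rV[R]_n) (g : 'rV[R]_n -> 'rV[R]_n) xs :=
  X xs /\ forall x, X x -> 0 <= pair (g x) (x - xs).

Definition bregman (n : nat) (h : 'rV[R]_n -> R) (gh : 'rV[R]_n -> 'rV[R]_n)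
  (p x : 'rV[R]_n) : R := h p - h x - pair (gh x) (p - x).

Definition is_prox (n : nat) (X : set 'rV[R]_n) (h : 'rV[R]_n -> R)
  (gh : 'rV[R]_n -> 'rV[R]_n) (x y z : 'rV[R]_n) : Prop :=
  X z /\ forall x', X x' ->
    pair y (x - z) + bregman h gh z x <= pair y (x - x') + bregman h gh x' x.

End Defs.

(* Main.v *)
Require Import Defs.
From HB Require Import structures.
From mathcomp Require Import all_boot all_order all_algebra.
From mathcomp Require Import all_classical all_reals all_analysis.
From mathcomp Require Import ring lra.
Import Order.TTheory GRing.Theory Num.Theory.
Import numFieldNormedType.Exports.
Local Open Scope classical_set_scope.
Local Open Scope ring_scope.

Module Aux.
Set Implicit Arguments. Unset Strict Implicit. Unset Printing Implicit Defensive.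

Section S.
Variable R : realType.
Lemma conv_ok d (X : set 'rV[R]_d) (a b : 'rV[R]_d) (t : R) :
  convex_set X -> X a -> X b -> 0 <= t -> t <= 1 -> X (b + t *: (a - b)).
Proof.
move=> cX Xa Xb t0 t1.
have := cX a b (Itv01 t0 t1); rewrite !inE => /(_ Xa Xb).
rewrite /conv /=.
suff -> : b + t *: (a - b) = t *: a + unstable.onem t *: b by [].
rewrite /unstable.onem scalerBl scale1r scalerBr.
by rewrite addrCA addrC -!addrA [- _ + _]addrC.
Qed.
End S.

Section Pair.
Variables (R : realType) (n : nat).
Implicit Types (x y u v : 'rV[R]_n).

Lemma pairDl y1 y2 x : pair (y1 + y2) x = pair y1 x + pair y2 x.
Proof. by rewrite /pair -big_split; apply: eq_bigr => i _; rewrite mxE mulrDl. Qed.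
Lemma pairDr y x1 x2 : pair y (x1 + x2) = pair y x1 + pair y x2.
Proof. by rewrite /pair -big_split; apply: eq_bigr => i _; rewrite mxE mulrDr. Qed.
Lemma pairZl a y x : pair (a *: y) x = a * pair y x.
Proof. by rewrite /pair mulr_sumr; apply: eq_bigr => i _; rewrite mxE mulrA. Qed.
Lemma pairZr a y x : pair y (a *: x) = a * pair y x.
Proof. by rewrite /pair mulr_sumr; apply: eq_bigr => i _; rewrite mxE mulrCA. Qed.
Lemma pairNl y x : pair (- y) x = - pair y x.
Proof. by rewrite -scaleN1r pairZl mulN1r. Qed.
Lemma pairNr y x : pair y (- x) = - pair y x.
Proof. by rewrite -scaleN1r pairZr mulN1r. Qed.
Lemma pairBl y1 y2 x : pair (y1 - y2) x = pair y1 x - pair y2 x.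
Proof. by rewrite pairDl pairNl. Qed.
Lemma pairBr y x1 x2 : pair y (x1 - x2) = pair y x1 - pair y x2.
Proof. by rewrite pairDr pairNr. Qed.
Lemma pair0r y : pair y 0 = 0.
Proof. by rewrite -(scale0r 0) pairZr mul0r. Qed.

Lemma entry_le_norm (v : 'rV[R]_n) i : `|v 0 i| <= `|v|.
Proof.
rewrite [X in _ <= X]/Num.norm /= mx_normrE.
by apply/bigmax_geP; right; exists (0, i).
Qed.

Lemma norm_le_entries (v : 'rV[R]_n) B : 0 <= B -> (forall i, `|v 0 i| <= B) -> `|v| <= B.
Proof.
move=> B0 H; rewrite [X in X <= _]/Num.norm /= mx_normrE.
apply/bigmax_leP; split => // -[i j] _ /=.
by rewrite (ord1 i); apply: H.
Qed.

Lemma pair_abs y x : `|pair y x| <= (\sum_i `|y 0 i|) * `|x|.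
Proof.
rewrite /pair mulr_suml; apply: le_trans (ler_norm_sum _ _ _) _.
apply: ler_sum => i _; rewrite normrM; apply: ler_wpM2l => //.
exact: entry_le_norm.
Qed.
End Pair.

Section Clus.
Variables (R : realType) (n : nat).
Lemma seq_cluster (A : set 'rV[R]_n) (u : nat -> 'rV[R]_n) :
  compact A -> (forall k, A (u k)) ->
  exists2 z, A z & forall N e, 0 < e -> exists k, (N <= k)%N /\ `|u k - z| < e.
Proof.
move=> cA uA.
have [|z [Az cl]] := cA (u @ \oo) _.
  by exists 0%N => // k _; exact: uA.
exists z => // N e e0.
have F1 : (u @ \oo) (u @` [set k | (N <= k)%N]).
  by exists N => // k /= Nk; exists k.
have F2 : nbhs z (ball z e) by exact: nbhsx_ballx.
have [w [[k /= Nk <-] bw]] := cl _ _ F1 F2.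
by exists k; split => //; move: bw; rewrite -ball_normE /= distrC.
Qed.
End Clus.

Section Nrm.
Variables (R : realType) (n : nat) (nrm : 'rV[R]_n -> R).
Hypothesis Hn : is_norm nrm.

Lemma nrm_ge0 x : 0 <= nrm x. Proof. by case: Hn. Qed.
Lemma nrm_eq0 x : nrm x = 0 -> x = 0. Proof. by case: Hn => _ H _ _; exact: H. Qed.
Lemma nrmZ a x : nrm (a *: x) = `|a| * nrm x. Proof. by case: Hn. Qed.
Lemma nrmD x y : nrm (x + y) <= nrm x + nrm y. Proof. by case: Hn. Qed.
Lemma nrm0 : nrm 0 = 0. Proof. by rewrite -(scale0r 0) nrmZ normr0 mul0r. Qed.
Lemma nrmN x : nrm (- x) = nrm x. Proof. by rewrite -scaleN1r nrmZ normrN normr1 mul1r. Qed.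
Lemma nrmBC x y : nrm (x - y) = nrm (y - x). Proof. by rewrite -nrmN opprB. Qed.

Lemma nrm_sum (f : 'I_n -> 'rV[R]_n) : nrm (\sum_i f i) <= \sum_i nrm (f i).
Proof.
apply: (big_ind2 (fun (a : 'rV_n) (b : R) => nrm a <= b)) => //.
- by rewrite nrm0.
- by move=> a b c d H1 H2; apply: le_trans (nrmD _ _) (lerD H1 H2).
Qed.

Lemma nrm_ub : exists2 M, 0 <= M & forall v, nrm v <= M * `|v|.
Proof.
exists (\sum_i nrm (delta_mx 0 i : 'rV[R]_n)).
  by apply: sumr_ge0 => i _; exact: nrm_ge0.
move=> v; rewrite {1}(row_sum_delta v); apply: le_trans (nrm_sum _) _.
rewrite mulr_suml; apply: ler_sum => i _; rewrite nrmZ mulrC.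
by apply: ler_wpM2l; [exact: nrm_ge0 | exact: entry_le_norm].
Qed.

Lemma nrm_lb : exists2 c, 0 < c & forall v, c * `|v| <= nrm v.
Proof.
have [M M0 HM] := nrm_ub.
apply: contrapT => H.
have /choice [w Hw] : forall k : nat, exists v : 'rV[R]_n, nrm v < k.+1%:R^-1 * `|v|.
  move=> k; apply: contrapT => H2; apply: H; exists (k.+1%:R^-1).
    by rewrite invr_gt0 ltr0n.
  by move=> v; rewrite leNgt; apply/negP => H3; apply: H2; exists v.
have wn0 k : 0 < `|w k|.
  rewrite lt_neqAle normr_ge0 andbT; apply/negP => /eqP Hz.
  by have := Hw k; rewrite -Hz mulr0 ltNge nrm_ge0.
pose u k := `|w k|^-1 *: w k.
have un k : `|u k| = 1.
  by rewrite /u normrZ normrV ?unitfE ?gt_eqF // normr_id mulVf // gt_eqF.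
have unrm k : nrm (u k) < k.+1%:R^-1.
  rewrite /u nrmZ normrV ?unitfE ?gt_eqF // normr_id.
  by rewrite ltr_pdivrMl // mulrC; exact: Hw.
pose Sph := [set v : 'rV[R]_n | `|v| = 1].
have cS : compact Sph.
  apply: bounded_closed_compact.
    rewrite /bounded_near; apply: filterS (nbhs_pinfty_ge (num_real 1)).
    by move=> B B1 v /= ->.
  rewrite (_ : Sph = (@Num.norm _ 'rV[R]_n) @^-1` [set x | x = 1]) //.
  apply: preimage_closed; last exact: closed_eq.
  move=> x _; exact: norm_continuous.
have [z Sz Hz] := seq_cluster cS un.
have zpos : 0 < nrm z.
  rewrite lt_neqAle nrm_ge0 andbT; apply/negP => /eqP H0.
  move: Sz; rewrite /Sph /= (nrm_eq0 (esym H0)) normr0 => H01.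
  by have := @oner_neq0 R; rewrite H01 eqxx.
set mu := nrm z.
pose N := Num.truncn (2 / mu).
have e0 : 0 < mu / (2 * (M + 1)) by rewrite divr_gt0 // mulr_gt0 //; lra.
have [k [Nk Hk]] := Hz N _ e0.
have h1 : k.+1%:R^-1 <= N.+1%:R^-1 :> R.
  by rewrite lef_pV2 ?posrE ?ltr0n // ler_nat.
have h2 : N.+1%:R^-1 < mu / 2.
  rewrite -[mu / 2]invf_div ltf_pV2 ?posrE ?ltr0n ?divr_gt0 //.
  exact: truncnS_gt.
have h3 : nrm z <= nrm (u k) + nrm (z - u k).
  by rewrite -{1}(subrK (u k) z) addrC nrmD.
have h4 : nrm (z - u k) <= M * (mu / (2 * (M + 1))).
  apply: le_trans (HM _) _; apply: ler_wpM2l => //; rewrite distrC; exact: ltW.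
have h5 : M * (mu / (2 * (M + 1))) < mu / 2.
  have M1 : M + 1 != 0 by rewrite gt_eqF //; lra.
  have -> : M * (mu / (2 * (M + 1))) = mu / 2 * (M / (M + 1)) by field.
  rewrite gtr_pMr ?divr_gt0 // ltr_pdivrMr; lra.

move: h4 h5; set q := M * _ => h4 h5.
have hm : mu = nrm z by [].
have h8 := lt_le_trans (unrm k) h1.
have h9 := lt_trans h8 h2.
have h10 := le_lt_trans h4 h5.
have := le_lt_trans h3 (ltrD h9 h10).
by rewrite -splitr ltxx.
Qed.
End Nrm.

Section Dn.
Variables (R : realType) (n : nat) (nrm : 'rV[R]_n -> R).
Hypothesis Hn : is_norm nrm.

Lemma pair_dnorm y x : pair y x <= dnorm nrm y * nrm x.
Proof.
have [c c0 Hc] := nrm_lb Hn.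
have ub : has_ubound [set pair y x | x in [set x | nrm x <= 1]].
  exists ((\sum_i `|y 0 i|) / c) => r [v /= Hv <-].
  apply: le_trans (ler_norm _) _; apply: le_trans (pair_abs _ _) _.
  rewrite mulrC ler_pdivlMr // mulrC -mulrA.
  apply: ler_piMr; first by apply: sumr_ge0.
  by rewrite mulrC; apply: le_trans (Hc v) Hv.
have [x0|xpos] := eqVneq (nrm x) 0.
  by rewrite x0 mulr0 (nrm_eq0 Hn x0) pair0r.
have xp : 0 < nrm x by rewrite lt_neqAle eq_sym xpos nrm_ge0.
have H1 : [set pair y x | x in [set x | nrm x <= 1]] (pair y ((nrm x)^-1 *: x)).
  exists ((nrm x)^-1 *: x) => //=.
  by rewrite (nrmZ Hn) ger0_norm ?invr_ge0 ?nrm_ge0 // mulVf.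
have := ub_le_sup ub H1.
by rewrite pairZr -/(dnorm nrm y) mulrC ler_pdivrMr.
Qed.

Lemma pair_abs_dnorm y x : `|pair y x| <= dnorm nrm y * nrm x.
Proof.
rewrite ler_norml pair_dnorm andbT lerNl -pairNr -(nrmN Hn x).
exact: pair_dnorm.
Qed.

Lemma pair_lip y x L r : dnorm nrm y <= L * r -> 0 <= r ->
  pair y x <= L * r * nrm x.
Proof.
move=> H r0; apply: le_trans (pair_dnorm _ _) _.
by apply: ler_wpM2r => //; exact: nrm_ge0.
Qed.
End Dn.

Section T.
Variables (R : realType) (n : nat) (h : 'rV[R]_n -> R).

Lemma seg_derive (a b : 'rV[R]_n) (t : R) :
  differentiable h (b + t *: (a - b)) ->
  is_derive t 1 (fun s : R => h (b + s *: (a - b))) ('d h (b + t *: (a - b)) (a - b)).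
Proof.
move=> dh.
have E : (fun s : R => s^-1 *: (((fun s : R => h (b + s *: (a - b))) \o shift t) (s *: 1)
          - h (b + t *: (a - b)))) =
         (fun s : R => s^-1 *: ((h \o shift (b + t *: (a - b))) (s *: (a - b)) - h (b + t *: (a - b)))).
  apply: funext => s /=; congr (_ *: (h _ - _)).
  by rewrite [s%:A]mulr1 scalerDl addrCA.
apply: DeriveDef.
  by rewrite /derivable E; exact: diff_derivable.
rewrite /derive E.
change (derive h (b + t *: (a - b)) (a - b) = 'd h (b + t *: (a - b)) (a - b)).
exact: deriveE.
Qed.

Lemma poly_derive (P Q t : R) : is_derive t 1 (fun s : R => P * s + Q * (s * s)) (P + Q * (t + t)).
Proof.
have -> : (fun s : R => P * s + Q * (s * s)) = (P \*: id) + (Q \*: (id * id)).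
  by apply: funext => s.
apply: is_derive_eq.
by rewrite ![_%:A]mulr1.
Qed.
End T.

Section H.
Variables (R : realType) (n : nat) (nrm : 'rV[R]_n -> R) (S : set 'rV[R]_n).
Variables (h : 'rV[R]_n -> R) (gh : 'rV[R]_n -> 'rV[R]_n) (K Lh : R).
Hypothesis Hn : is_norm nrm.
Hypothesis HS : forall a b t, S a -> S b -> 0 <= t -> t <= 1 -> S (b + t *: (a - b)).
Hypothesis hd : forall x, S x -> differentiable h x.
Hypothesis hg : forall x, S x -> forall v, pair (gh x) v = 'd h x v.

Lemma seg_der a b (t : R) : S a -> S b -> 0 <= t -> t <= 1 ->
  is_derive t 1 (fun s : R => h (b + s *: (a - b))) (pair (gh (b + t *: (a - b))) (a - b)).
Proof.
move=> Sa Sb t0 t1; have St := HS Sa Sb t0 t1.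
by rewrite hg //; apply: seg_derive; exact: hd.
Qed.

Lemma seg_cont a b : S a -> S b ->
  {within `[0, 1], continuous (fun s : R => h (b + s *: (a - b)))}.
Proof.
move=> Sa Sb; apply: derivable_within_continuous => t.
rewrite in_itv /= => /andP[t0 t1].
by case: (seg_der Sa Sb t0 t1).
Qed.

Lemma h_mvt a b : S a -> S b ->
  exists2 c, 0 < c < 1 & h a - h b = pair (gh (b + c *: (a - b))) (a - b).
Proof.
move=> Sa Sb.
have [t|c c01 Hc] := @MVT R (fun s : R => h (b + s *: (a - b)))
  (fun t => pair (gh (b + t *: (a - b))) (a - b)) 0 1 ltr01 _ (seg_cont Sa Sb).
  by rewrite in_itv /= => /andP[/ltW t0 /ltW t1]; exact: seg_der.
exists c; first by move: c01; rewrite in_itv.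
by move: Hc; rewrite scale1r scale0r addr0 [b + _]addrC subrK subr0 mulr1.
Qed.

Hypothesis K0 : 0 < K.
Hypothesis hK : forall x x', S x -> S x' ->
     K * nrm (x - x') ^+ 2 <= pair (gh x - gh x') (x - x').

Lemma breg_lb a b : S a -> S b -> K / 2 * nrm (a - b) ^+ 2 <= bregman h gh a b.
Proof.
move=> Sa Sb.
set P := pair (gh b) (a - b).
set Q := K / 2 * nrm (a - b) ^+ 2.
pose f := (fun s : R => h (b + s *: (a - b))) - (fun s : R => P * s + Q * (s * s)).
have fder (t : R) : 0 <= t -> t <= 1 ->
    is_derive t 1 f (pair (gh (b + t *: (a - b))) (a - b) - (P + Q * (t + t))).
  move=> t0 t1; apply: is_deriveB; first exact: seg_der.
  exact: poly_derive.
have [t||c c01 Hc] := @MVT R f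
  (fun t => pair (gh (b + t *: (a - b))) (a - b) - (P + Q * (t + t))) 0 1 ltr01 _ _.
- by rewrite in_itv /= => /andP[/ltW t0 /ltW t1]; exact: fder.
- apply: derivable_within_continuous => t.
  rewrite in_itv /= => /andP[t0 t1].
  by case: (fder t t0 t1).
have E1 : f 1 = h a - (P + Q).
  by rewrite /f !fctE /= scale1r [b + _]addrC subrK !mulr1.
have E0 : f 0 = h b.
  by rewrite /f !fctE /= scale0r addr0 !mulr0 addr0 subr0.
move: Hc; rewrite E1 E0 subr0 mulr1 => Hc.
move: c01; rewrite in_itv /= => /andP[c0 c1].
have Sc := HS Sa Sb (ltW c0) (ltW c1).
have H1 := hK Sc Sb.
have E2 : b + c *: (a - b) - b = c *: (a - b) by rewrite addrAC subrr add0r.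
rewrite E2 (nrmZ Hn) pairZr ger0_norm ?(ltW c0) // pairBl -/P in H1.
have H2 : K * c * nrm (a - b) ^+ 2 <= pair (gh (b + c *: (a - b))) (a - b) - P.
  rewrite -(ler_pM2l c0); apply: le_trans H1; rewrite le_eqVlt; apply/orP; left.
  by apply/eqP; ring.
have E3 : Q * (c + c) = K * c * nrm (a - b) ^+ 2 by rewrite /Q; field.
rewrite /bregman -/P.
lra.
Qed.
End H.

Lemma three_point (R : realType) n (h : 'rV[R]_n -> R) gh p x y :
  bregman h gh p x - bregman h gh p y - bregman h gh y x = pair (gh y - gh x) (p - y).
Proof. rewrite /bregman !pairBl !pairBr; ring. Qed.

Section P.
Variables (R : realType) (n : nat) (nrm : 'rV[R]_n -> R) (S : set 'rV[R]_n).
Variables (h : 'rV[R]_n -> R) (gh : 'rV[R]_n -> 'rV[R]_n) (K Lh : R).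
Hypothesis Hn : is_norm nrm.
Hypothesis HS : forall a b t, S a -> S b -> 0 <= t -> t <= 1 -> S (b + t *: (a - b)).
Hypothesis hd : forall x, S x -> differentiable h x.
Hypothesis hg : forall x, S x -> forall v, pair (gh x) v = 'd h x v.
Hypothesis hL : forall x x', S x -> S x' -> dnorm nrm (gh x - gh x') <= Lh * nrm (x - x').

Lemma prox_opt x y z u : S x -> is_prox S h gh x y z -> S u ->
  0 <= pair (gh z - gh x - y) (u - z).
Proof.
move=> Sx [Sz Hmin] Su.
set v := u - z.
have nv0 := nrm_ge0 Hn v.
set A := pair (gh z - gh x - y) v.
set B := `|Lh| * nrm v ^+ 2.
have B0 : 0 <= B by rewrite /B mulr_ge0 // exprn_ge0.
suff key : forall t, 0 < t -> t <= 1 -> 0 <= A + t * B.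
  apply/ler_addgt0Pr => e e0.
  pose t := Num.min 1 (e / (B + 1)).
  have t0 : 0 < t by rewrite /t lt_min ltr01 divr_gt0 //; lra.
  have t1 : t <= 1 by rewrite /t ge_min lexx.
  have tB : t * B <= e.
    have : t <= e / (B + 1) by rewrite /t ge_min lexx orbT.
    rewrite ler_pdivlMr; last lra.
    move=> H; apply: le_trans _ H; rewrite mulrDr mulr1 lerDl; exact: ltW.
  have := key t t0 t1; lra.
move=> t t0 t1.
have Sw := HS Su Sz (ltW t0) t1.
have Hw := Hmin _ Sw.
have [c /andP[c0 c1] Hc] := h_mvt HS hd hg Sw Sz.
have E1 : z + t *: (u - z) - z = t *: v by rewrite addrAC subrr add0r.
rewrite E1 in Hc.
have Sxi : S (z + (c * t) *: v).
  apply: HS => //; first by rewrite mulr_ge0 // ltW.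
  by rewrite mulr_ile1 // ltW.
have Exi : z + c *: (t *: v) = z + (c * t) *: v by rewrite scalerA.
rewrite Exi in Hc.
have Hl : pair (gh (z + (c * t) *: v) - gh z) v <= B * t.
  apply: le_trans (pair_dnorm Hn _ _) _.
  have := hL Sxi Sz; rewrite addrAC subrr add0r (nrmZ Hn) ger0_norm; last first.
    by rewrite mulr_ge0 // ltW.
  move=> H; apply: le_trans (ler_wpM2r nv0 H) _.
  have ctN : 0 <= c * t * nrm v by rewrite !mulr_ge0 // ltW.
  have H1 : Lh * (c * t * nrm v) * nrm v <= `|Lh| * (c * t * nrm v) * nrm v.
    by apply: ler_wpM2r => //; apply: ler_wpM2r => //; exact: ler_norm.
  have H2 : `|Lh| * (c * t * nrm v) * nrm v <= `|Lh| * (t * nrm v) * nrm v.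
    apply: ler_wpM2r => //; apply: ler_wpM2l => //.
    rewrite -mulrA ler_piMl //; [by rewrite mulr_ge0 // ltW|exact: ltW].
  have E : `|Lh| * (t * nrm v) * nrm v = B * t by rewrite /B; ring.
  by rewrite -E; exact: le_trans H1 H2.
have Hl' := ler_wpM2l (ltW t0) Hl.
move: Hw Hc; rewrite -/v => Hw Hc; clearbody v B.
have key2 : 0 <= t * (A + t * B).
  move: Hw Hc Hl'; rewrite /A /bregman !pairBl !pairBr !pairDr !pairZr.
  move=> Hw Hc Hl2; nra.
by rewrite pmulr_rge0 in key2.
Qed.
End P.

Section E.
Variables (R : realType) (n : nat) (nrm : 'rV[R]_n -> R) (S : set 'rV[R]_n).
Variables (h : 'rV[R]_n -> R) (gh g : 'rV[R]_n -> 'rV[R]_n) (K Lh Lg : R).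
Hypothesis Hn : is_norm nrm.
Hypothesis HS : forall a b t, S a -> S b -> 0 <= t -> t <= 1 -> S (b + t *: (a - b)).
Hypothesis hd : forall x, S x -> differentiable h x.
Hypothesis hg : forall x, S x -> forall v, pair (gh x) v = 'd h x v.
Hypothesis hL : forall x x', S x -> S x' -> dnorm nrm (gh x - gh x') <= Lh * nrm (x - x').
Hypothesis K0 : 0 < K.
Hypothesis hK : forall x x', S x -> S x' ->
     K * nrm (x - x') ^+ 2 <= pair (gh x - gh x') (x - x').
Hypothesis Lg0 : 0 <= Lg.
Hypothesis gL : forall x x', S x -> S x' -> dnorm nrm (g x - g x') <= Lg * nrm (x - x').

Lemma energy x y xp p gam b :
  S x -> S p -> is_prox S h gh x (- (gam *: g x)) y ->
  is_prox S h gh x (- (gam *: g y)) xp ->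
  0 < gam -> gam <= b ->
  bregman h gh p xp <= bregman h gh p x - gam * pair (g y) (y - p)
     - (K - b * Lg) / 2 * (nrm (xp - y) ^+ 2 + nrm (y - x) ^+ 2).
Proof.
move=> Sx Sp Hy Hxp g0 gb.
have Sy : S y by case: Hy.
have Sxp : S xp by case: Hxp.
have O1 := prox_opt Hn HS hd hg hL Sx Hxp Sp.
have O2 := prox_opt Hn HS hd hg hL Sx Hy Sxp.
have T1 := three_point h gh p x xp.
have T2 := three_point h gh xp x y.
have B1 := breg_lb Hn HS hd hg hK Sxp Sy.
have B2 := breg_lb Hn HS hd hg hK Sy Sx.
set N1 := nrm (y - x). set N2 := nrm (xp - y).
have N10 : 0 <= N1 := nrm_ge0 Hn _.
have N20 : 0 <= N2 := nrm_ge0 Hn _.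
have L1 : pair (g y - g x) (y - xp) <= Lg * N1 * N2.
  rewrite /N2 (nrmBC Hn); apply: (pair_lip Hn); [exact: gL | exact: nrm_ge0].
have L2 : gam * pair (g y - g x) (y - xp) <= b * Lg / 2 * (N1 ^+ 2 + N2 ^+ 2).
  apply: le_trans (ler_wpM2l (ltW g0) L1) _.
  have : gam * (Lg * N1 * N2) <= b * (Lg * N1 * N2).
    by apply: ler_wpM2r => //; rewrite !mulr_ge0.
  move=> H; apply: le_trans H _.
  have : 2 * (N1 * N2) <= N1 ^+ 2 + N2 ^+ 2.
    have := sqr_ge0 (N1 - N2); rewrite sqrrB; lra.
  have b0 : 0 <= b * Lg by rewrite mulr_ge0 //; lra.
  nra.
rewrite -/N1 -/N2 in B1 B2; clearbody N1 N2.
move: O1 O2 L2 T1 T2; rewrite !pairBl !pairNl !pairZl !pairBr.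
move=> O1 O2 L2 T1 T2.
nra.
Qed.
End E.

Lemma seq_mono (R : realType) (a : nat -> R) N0 :
  (forall k, (N0 <= k)%N -> a k.+1 <= a k) -> forall k j, (N0 <= k)%N -> a (k + j)%N <= a k.
Proof.
move=> H k j Hk; elim: j => [|j IH]; first by rewrite addn0.
by rewrite addnS; apply: le_trans (H _ _) IH; apply: leq_trans Hk (leq_addr _ _).
Qed.

Lemma seq_lemma (R : realType) (a r : nat -> R) N0 (al : R) :
  0 < al -> (forall k, 0 <= a k) -> (forall k, 0 <= r k) ->
  (forall k, (N0 <= k)%N -> a k.+1 <= a k - al * r k ^+ 2) ->
  forall eta, 0 < eta -> exists N, forall k, (N <= k)%N -> r k <= eta.
Proof.
move=> al0 a0 r0 H eta eta0.
have Hm : forall k, (N0 <= k)%N -> a k.+1 <= a k.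
  move=> k Hk; apply: le_trans (H k Hk) _; rewrite lerBlDr lerDl.
  by apply: mulr_ge0; [exact: ltW | exact: sqr_ge0].
apply: contrapT => Hc.
have Hf : forall N, exists k, (N <= k)%N /\ eta < r k.
  move=> N; apply: contrapT => H2; apply: Hc; exists N => k Hk.
  rewrite leNgt; apply/negP => H3; apply: H2; exists k; split => //.
have d0 : 0 < al * eta ^+ 2 by rewrite mulr_gt0 // exprn_gt0.
have claim : forall m : nat, exists k, (N0 <= k)%N /\ a k <= a N0 - m%:R * (al * eta ^+ 2).
  elim => [|m [k [Hk Hak]]].
    by exists N0; split => //; rewrite mul0r subr0.
  have [k' [kk' Hr]] := Hf k.
  exists k'.+1; split; first by apply: leq_trans Hk (leq_trans kk' (leqnSn _)).
  have Hk' : (N0 <= k')%N by apply: leq_trans Hk kk'.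
  have e1 := H k' Hk'.
  have e2 : a k' <= a k by rewrite -(subnKC kk'); exact: (seq_mono Hm _ Hk).
  have e3 : al * eta ^+ 2 <= al * r k' ^+ 2.
    by rewrite ler_pM2l // lerXn2r // ?nnegrE ?(ltW eta0) // ltW.
  rewrite -natr1 mulrDl mul1r; lra.
pose m := Num.truncn (a N0 / (al * eta ^+ 2)).
have [k [_ Hk]] := claim m.+1.
have Hm1 : a N0 < m.+1%:R * (al * eta ^+ 2).
  by rewrite -ltr_pdivrMr //; exact: truncnS_gt.
have := a0 k; lra.
Qed.

Lemma lip_abs (R : realType) n (nrm : 'rV[R]_n -> R) (F : 'rV[R]_n -> 'rV[R]_n) L a b v :
  is_norm nrm -> dnorm nrm (F a - F b) <= L * nrm (a - b) ->
  `|pair (F a - F b) v| <= `|L| * nrm (a - b) * nrm v.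
Proof.
move=> Hn H; apply: le_trans (pair_abs_dnorm Hn _ _) _.
apply: ler_wpM2r; first exact: nrm_ge0.
apply: le_trans H _; apply: ler_wpM2r; [exact: nrm_ge0 | exact: ler_norm].
Qed.

Lemma small_mul (R : realType) (C x e : R) : 0 <= C -> 0 < e -> x <= e / (2 * (C + 1)) ->
  C * x <= e / 2.
Proof.
move=> C0 e0 H.
apply: le_trans (ler_wpM2l C0 H) _.
have C1 : C + 1 != 0 by rewrite gt_eqF //; lra.
have -> : C * (e / (2 * (C + 1))) = e / 2 * (C / (C + 1)) by field.
apply: ler_piMr; first by rewrite divr_ge0 // ltW.
by rewrite ler_pdivrMr ?mul1r; lra.
Qed.

Section Main.
Variables (R : realType) (n : nat) (nrm : 'rV[R]_n -> R) (S : set 'rV[R]_n).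
Variables (h : 'rV[R]_n -> R) (gh g : 'rV[R]_n -> 'rV[R]_n) (K Lh Lg : R).
Variables (sad : 'rV[R]_n -> Prop) (gamma : nat -> R) (Xs Ys : nat -> 'rV[R]_n).
Variables (b ginf eps0 : R) (p : 'rV[R]_n).
Hypothesis Hn : is_norm nrm.
Hypothesis HS : forall a b t, S a -> S b -> 0 <= t -> t <= 1 -> S (b + t *: (a - b)).
Hypothesis cS : compact S.
Hypothesis hd : forall x, S x -> differentiable h x.
Hypothesis hg : forall x, S x -> forall v, pair (gh x) v = 'd h x v.
Hypothesis hL : forall x x', S x -> S x' -> dnorm nrm (gh x - gh x') <= Lh * nrm (x - x').
Hypothesis K0 : 0 < K.
Hypothesis hK : forall x x', S x -> S x' ->
     K * nrm (x - x') ^+ 2 <= pair (gh x - gh x') (x - x').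
Hypothesis Lg0 : 0 <= Lg.
Hypothesis gL : forall x x', S x -> S x' -> dnorm nrm (g x - g x') <= Lg * nrm (x - x').
Hypothesis coh1 : forall x, S x -> (forall u, S u -> 0 <= pair (g x) (u - x)) -> sad x.
Hypothesis Sp : S p.
Hypothesis MVIp : forall x, S x -> 0 <= pair (g x) (x - p).
Hypothesis eps0p : 0 < eps0.
Hypothesis coh3 : forall xs, sad xs -> forall x, S x ->
       bregman h gh xs x <= eps0 -> 0 <= pair (g x) (x - xs).
Hypothesis gcv : gamma @ \oo --> ginf.
Hypothesis ginf0 : 0 < ginf.
Hypothesis gb : forall k, gamma k <= b.
Hypothesis bLg : b * Lg < K.
Hypothesis SX0 : S (Xs 0%N).
Hypothesis HY : forall k, is_prox S h gh (Xs k) (- (gamma k *: g (Xs k))) (Ys k).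
Hypothesis HX : forall k, is_prox S h gh (Xs k) (- (gamma k *: g (Ys k))) (Xs k.+1).

Lemma SX k : S (Xs k).
Proof. by elim: k => // k _; case: (HX k). Qed.
Lemma SY k : S (Ys k).
Proof. by case: (HY k). Qed.

Lemma breg0 a c : S a -> S c -> 0 <= bregman h gh a c.
Proof.
move=> Sa Sc; apply: le_trans (breg_lb Hn HS hd hg hK Sa Sc).
by rewrite mulr_ge0 ?sqr_ge0 // divr_ge0 // ltW.
Qed.

Lemma Bnd : exists2 B, 0 <= B & forall x, S x -> `|x| <= B.
Proof.
have [M [_ HM]] := compact_bounded cS.
exists (`|M| + 1); first by rewrite addr_ge0.
move=> x Sx; apply: (HM (`|M| + 1)) => //.
by apply: le_lt_trans (ler_norm M) _; rewrite ltrDl.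
Qed.

Lemma Diam : exists2 Dm, 0 <= Dm & forall u w, S u -> S w -> nrm (u - w) <= Dm.
Proof.
have [B B0 HB] := Bnd.
have [M0 M00 HM0] := nrm_ub Hn.
exists (M0 * (B + B)); first by rewrite mulr_ge0 // addr_ge0.
move=> u w Su Sw; apply: le_trans (HM0 _) _; apply: ler_wpM2l => //.
apply: le_trans (ler_normB _ _) _; exact: lerD (HB _ Su) (HB _ Sw).
Qed.

Lemma gam_ev : exists N0, forall k, (N0 <= k)%N -> ginf / 2 < gamma k.
Proof.
have := (cvgrPdist_lt _ _).1 gcv (ginf / 2) _.
case; first by rewrite divr_gt0.
move=> N0 _ HN0; exists N0 => k Hk.
have := HN0 k Hk; rewrite /= => H.
have := ler_norm (ginf - gamma k); lra.
Qed.


Lemma step1 : exists N0, (forall k, (N0 <= k)%N -> ginf / 2 < gamma k) /\ forall eta, 0 < eta -> exists N, forall k, (N <= k)%N -> nrm (Ys k - Xs k) <= eta.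
Proof.
have [N0 HN0] := gam_ev.
exists N0; split => //.
have al0 : 0 < (K - b * Lg) / 2 by rewrite divr_gt0 // subr_gt0.
apply: (@seq_lemma _ (fun k => bregman h gh p (Xs k)) (fun k => nrm (Ys k - Xs k)) N0 _ al0).
- by move=> k; exact: breg0 Sp (SX k).
- by move=> k; exact: nrm_ge0.
move=> k Hk.
have gpos : 0 < gamma k by apply: lt_trans (HN0 k Hk); rewrite divr_gt0.
have E := energy Hn HS hd hg hL hK Lg0 gL (SX k) Sp (HY k) (HX k) gpos (gb k).
have M1 := mulr_ge0 (ltW gpos) (MVIp (SY k)).
have M2 : 0 <= (K - b * Lg) / 2 * nrm (Xs k.+1 - Ys k) ^+ 2.
  by rewrite mulr_ge0 // ?sqr_ge0 // ltW.
move: E; rewrite mulrDr; lra.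
Qed.

Lemma clus : exists2 z, S z & forall N e, 0 < e -> exists k, (N <= k)%N /\ nrm (Xs k - z) < e.
Proof.
have [z Sz Hz] := seq_cluster cS SX.
have [M0 M00 HM0] := nrm_ub Hn.
exists z => // N e e0.
have e1 : 0 < e / (M0 + 1) by rewrite divr_gt0 //; lra.
have [k [Nk Hk]] := Hz N _ e1.
exists k; split => //; apply: le_lt_trans (HM0 _) _.
have H1 : M0 * `|Xs k - z| <= M0 * (e / (M0 + 1)) by apply: ler_wpM2l => //; exact: ltW.
apply: le_lt_trans H1 _.
have M1 : M0 + 1 != 0 by rewrite gt_eqF //; lra.
have -> : M0 * (e / (M0 + 1)) = e * (M0 / (M0 + 1)) by field.
rewrite gtr_pMr // ltr_pdivrMr; lra.
Qed.


Lemma svi z : S z ->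
  (forall N e, 0 < e -> exists k, (N <= k)%N /\ nrm (Xs k - z) < e) ->
  forall u, S u -> 0 <= pair (g z) (u - z).
Proof.
move=> Sz Hz u Su.
have [N0 [HN0 Hr]] := step1.
have [Dm Dm0 HDm] := Diam.
set Q := pair (g z) (u - z).
apply/ler_addgt0Pr => e e0.
set L1 := `|Lh|. set Gz := `|dnorm nrm (g z)|. set gm := ginf / 2.
have gm0 : 0 < gm by rewrite divr_gt0.
have L10 : 0 <= L1 by exact: normr_ge0.
have Gz0 : 0 <= Gz by exact: normr_ge0.
set C1 := L1 * Dm / gm + Gz. set C2 := Lg * Dm + Gz.
have C10 : 0 <= C1 by rewrite addr_ge0 // divr_ge0 ?mulr_ge0 // ltW.
have C20 : 0 <= C2 by rewrite addr_ge0 // mulr_ge0.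
have eta0 : 0 < e / (2 * (C1 + 1)) by rewrite divr_gt0 // mulr_gt0 //; lra.
have del0 : 0 < e / (2 * (C2 + 1)) by rewrite divr_gt0 // mulr_gt0 //; lra.
have [N1 HN1] := Hr _ eta0.
have [k [Hk Hd]] := Hz (maxn N0 N1) _ del0.
have Hk0 : (N0 <= k)%N by apply: leq_trans (leq_maxl _ _) Hk.
have Hk1 : (N1 <= k)%N by apply: leq_trans (leq_maxr _ _) Hk.
have Hrk := HN1 k Hk1.
have Hgk := HN0 k Hk0.
have O := prox_opt Hn HS hd hg hL (SX k) (HY k) Su.
have O' : 0 <= pair (gh (Ys k) - gh (Xs k)) (u - Ys k) + gamma k * pair (g (Xs k)) (u - Ys k).
  by move: O; rewrite [pair (_ - - _) _]pairBl pairNl pairZl opprK.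
set rk := nrm (Ys k - Xs k). set d := nrm (Xs k - z).
have rk0 : 0 <= rk := nrm_ge0 Hn _.
have d0 : 0 <= d := nrm_ge0 Hn _.
have DuY := HDm _ _ Su (SY k).
have P1 : pair (gh (Ys k) - gh (Xs k)) (u - Ys k) <= L1 * rk * Dm.
  apply: le_trans (ler_norm _) _; apply: le_trans (lip_abs _ Hn (hL (SY k) (SX k))) _.
  by apply: ler_wpM2l => //; rewrite mulr_ge0.
have P2 : pair (g (Xs k) - g z) (u - Ys k) <= Lg * d * Dm.
  apply: le_trans (ler_norm _) _; apply: le_trans (lip_abs _ Hn (gL (SX k) Sz)) _.
  by rewrite (ger0_norm Lg0); apply: ler_wpM2l => //; rewrite mulr_ge0.
have P3 : pair (g z) (z - Ys k) <= Gz * (d + rk).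
  apply: le_trans (ler_norm _) _; apply: le_trans (pair_abs_dnorm Hn _ _) _.
  have H0 : dnorm nrm (g z) * nrm (z - Ys k) <= Gz * nrm (z - Ys k).
    by apply: ler_wpM2r; [exact: nrm_ge0 | exact: ler_norm].
  apply: le_trans H0 _; apply: ler_wpM2l => //.
  have -> : z - Ys k = (z - Xs k) + (Xs k - Ys k) by rewrite addrA subrK.
  by apply: le_trans (nrmD Hn _ _) _; rewrite (nrmBC Hn z (Xs k)) (nrmBC Hn (Xs k) (Ys k)).
have Dec : pair (g (Xs k)) (u - Ys k) = Q + pair (g (Xs k) - g z) (u - Ys k) + pair (g z) (z - Ys k).
  by rewrite /Q !pairBl !pairBr; ring.
set W := pair (g (Xs k)) (u - Ys k) in O' Dec *.
set A := pair (gh (Ys k) - gh (Xs k)) (u - Ys k) in O' P1 *.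
have gk0 : 0 < gamma k by apply: lt_trans Hgk.
have S1 : 0 <= gm * W + L1 * rk * Dm.
  have H1 : 0 <= gamma k * (gm * W + L1 * rk * Dm).
    have H2 : 0 <= (gamma k - gm) * (L1 * rk * Dm).
      by apply: mulr_ge0; [rewrite subr_ge0 ltW | rewrite !mulr_ge0].
    nra.
  by rewrite pmulr_rge0 in H1.
have E1 : gm * (C1 * rk) = L1 * rk * Dm + gm * (Gz * rk).
  rewrite /C1; field; exact: lt0r_neq0.
have S2 : 0 <= gm * (Q + C2 * d + C1 * rk).
  rewrite /C2; nra.
rewrite pmulr_rge0 // in S2.
have hC1 : C1 * rk <= e / 2 by exact: small_mul.
have hC2 : C2 * d <= e / 2 by apply: small_mul => //; exact: ltW.
lra.
Qed.

Lemma key z : S z -> sad z ->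
  (forall N e, 0 < e -> exists k, (N <= k)%N /\ nrm (Xs k - z) < e) ->
  forall dl, 0 < dl -> dl <= eps0 / 2 -> exists n1, forall k, (n1 <= k)%N ->
    bregman h gh z (Xs k) <= dl /\ bregman h gh z (Xs k.+1) <= bregman h gh z (Xs k).
Proof.
move=> Sz Hsad Hz dl dl0 dle.
have [N0 [HN0 Hr]] := step1.
have [Dm Dm0 HDm] := Diam.
set L1 := `|Lh|.
have L10 : 0 <= L1 by exact: normr_ge0.
have eta0 : 0 < eps0 / (2 * (L1 * Dm + 1)).
  by rewrite divr_gt0 // mulr_gt0 // ltr_pwDr // mulr_ge0.
have [N1 HN1] := Hr _ eta0.
pose rho := Num.min 1 (dl / (L1 + 1)).
have rho0 : 0 < rho by rewrite /rho lt_min ltr01 divr_gt0 //; lra.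
have [k1 [Hk1 Hd1]] := Hz (maxn N0 N1) _ rho0.
have HK0 k : (k1 <= k)%N -> (N0 <= k)%N.
  by move=> H; apply: leq_trans (leq_trans (leq_maxl _ _) Hk1) H.
have HK1 k : (k1 <= k)%N -> (N1 <= k)%N.
  by move=> H; apply: leq_trans (leq_trans (leq_maxr _ _) Hk1) H.
have step k : (k1 <= k)%N -> bregman h gh z (Xs k) <= dl ->
    bregman h gh z (Xs k.+1) <= bregman h gh z (Xs k).
  move=> Hk Hdl.
  have Hrk := HN1 k (HK1 k Hk).
  have T := three_point h gh z (Xs k) (Ys k).
  have P1 := lip_abs (z - Ys k) Hn (hL (SY k) (SX k)).
  have Dz := HDm _ _ Sz (SY k).
  have rk0 := nrm_ge0 Hn (Ys k - Xs k).
  have P2 : `|Lh| * nrm (Ys k - Xs k) * nrm (z - Ys k) <= eps0 / 2.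
    have H5 : L1 * Dm * nrm (Ys k - Xs k) <= eps0 / 2.
      by apply: small_mul => //; exact: mulr_ge0.
    apply: le_trans H5.
    by rewrite -/L1 mulrAC; apply: ler_wpM2r => //; apply: ler_wpM2l.
  have B0 := breg0 (SY k) (SX k).
  have DY : bregman h gh z (Ys k) <= eps0.
    have := lerNnormlW (le_trans P1 P2); lra.
  have Hc3 := coh3 Hsad (SY k) DY.
  have gpos : 0 < gamma k by apply: lt_trans (HN0 k (HK0 k Hk)); rewrite divr_gt0.
  have E := energy Hn HS hd hg hL hK Lg0 gL (SX k) Sz (HY k) (HX k) gpos (gb k).
  have M1 := mulr_ge0 (ltW gpos) Hc3.
  have M2 : 0 <= (K - b * Lg) / 2 * (nrm (Xs k.+1 - Ys k) ^+ 2 + nrm (Ys k - Xs k) ^+ 2).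
    by rewrite mulr_ge0 ?addr_ge0 ?sqr_ge0 // divr_ge0 // subr_ge0 ltW.
  lra.
have init : bregman h gh z (Xs k1) <= dl.
  have sym : bregman h gh z (Xs k1) + bregman h gh (Xs k1) z =
      pair (gh z - gh (Xs k1)) (z - Xs k1).
    by rewrite /bregman !pairBl !pairBr; ring.
  have P1 := lip_abs (z - Xs k1) Hn (hL Sz (SX k1)).
  have B0 := breg0 (SX k1) Sz.
  rewrite (nrmBC Hn z) -/L1 in P1.
  set N := nrm (Xs k1 - z) in Hd1 P1.
  have N0' : 0 <= N := nrm_ge0 Hn _.
  have Hr1 : N <= 1 by apply: le_trans (ltW Hd1) _; rewrite /rho ge_min lexx.
  have Hr2 : N <= dl / (L1 + 1) by apply: le_trans (ltW Hd1) _; rewrite /rho ge_min lexx orbT.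
  have Hr3 : (L1 + 1) * N <= dl by rewrite mulrC -ler_pdivlMr //; lra.
  have Hr4 : L1 * N * N <= L1 * N by rewrite ler_piMr // mulr_ge0.
  have := ler_norm (pair (gh z - gh (Xs k1)) (z - Xs k1)).
  nra.
have all j : bregman h gh z (Xs (k1 + j)%N) <= dl.
  elim: j => [|j IH]; first by rewrite addn0.
  rewrite addnS; apply: le_trans (step _ (leq_addr _ _) IH) IH.
exists k1 => k Hk.
have Hkd : bregman h gh z (Xs k) <= dl by rewrite -(subnKC Hk); exact: all.
by split => //; exact: step.
Qed.

Lemma main_res : exists z, sad z /\ Xs @ \oo --> z /\ exists n0, forall k, (n0 <= k)%N ->
   bregman h gh z (Xs k.+1) <= bregman h gh z (Xs k).
Proof.
have [z Sz Hz] := clus.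
have Hsad := coh1 Sz (svi Sz Hz).
have Hk := key Sz Hsad Hz.
exists z; split => //; split; last first.
  have [|n0 Hn0] := Hk (eps0 / 2) _ (lexx _); first by rewrite divr_gt0.
  by exists n0 => k /Hn0 [].
apply/cvgrPdist_lt => e e0.
have [c c0 Hc] := nrm_lb Hn.
pose dl := Num.min (eps0 / 2) (K * (c * e) ^+ 2 / 4).
have ce0 : 0 < c * e by rewrite mulr_gt0.
have dl0 : 0 < dl by rewrite /dl lt_min !divr_gt0 // mulr_gt0 // exprn_gt0.
have dle : dl <= eps0 / 2 by rewrite /dl ge_min lexx.
have [n1 Hn1] := Hk dl dl0 dle.
exists n1 => // k /= Hk1.
have [H1 _] := Hn1 k Hk1.
have H2 : dl <= K * (c * e) ^+ 2 / 4 by rewrite /dl ge_min lexx orbT.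
have H3 := breg_lb Hn HS hd hg hK Sz (SX k).
set N := nrm (z - Xs k) in H3 *.
have N0 : 0 <= N := nrm_ge0 Hn _.
have N2 : N ^+ 2 <= (c * e) ^+ 2 / 2.
  rewrite -(ler_pM2l K0); nra.
have N3 : N < c * e.
  rewrite ltNge; apply/negP => H.
  have := mulr_gt0 ce0 ce0; nra.
have := Hc (z - Xs k); rewrite -/N => H4.
rewrite -(ltr_pM2l c0); lra.
Qed.
End Main.

Lemma prod_compact (R : realType) d1 d2 (X1 : set 'rV[R]_d1) (X2 : set 'rV[R]_d2) :
  compact X1 -> compact X2 -> compact (prodset X1 X2).
Proof.
move=> cX1 cX2.
apply: bounded_closed_compact.
  have [M1 [_ HM1]] := compact_bounded cX1.
  have [M2 [_ HM2]] := compact_bounded cX2.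
  exists (`|M1| + `|M2|); split; first exact: num_real.
  move=> M HM x [Xx1 Xx2].
  have M0 : 0 <= M by apply: le_trans (ltW HM); rewrite addr_ge0.
  have HM1' : `|lsubmx x| <= M.
    apply: (HM1 M) => //; apply: le_lt_trans HM; apply: le_trans (ler_norm M1) _.
    by rewrite lerDl.
  have HM2' : `|rsubmx x| <= M.
    apply: (HM2 M) => //; apply: le_lt_trans HM; apply: le_trans (ler_norm M2) _.
    by rewrite lerDr.
  apply: norm_le_entries => // i.
  rewrite -[x]hsubmxK mxE; case: (fintype.split i) => j.
    by apply: le_trans HM1'; exact: entry_le_norm.
  by apply: le_trans HM2'; exact: entry_le_norm.
rewrite (_ : prodset X1 X2 = (lsubmx @^-1` X1) `&` (rsubmx @^-1` X2)) //.
apply: closedI.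
  apply: preimage_closed; last exact: compact_closed (@norm_hausdorff _ _) cX1.
  by move=> x _; exact: continuous_lsubmx.
apply: preimage_closed; last exact: compact_closed (@norm_hausdorff _ _) cX2.
by move=> x _; exact: continuous_rsubmx.
Qed.
End Aux.
Import Aux.

Theorem theorem1 (R : realType) (d1 d2 : nat)
  (nrm : 'rV[R]_(d1 + d2) -> R)
  (X1 : set 'rV[R]_d1) (X2 : set 'rV[R]_d2)
  (f : 'rV[R]_(d1 + d2) -> R) (g : 'rV[R]_(d1 + d2) -> 'rV[R]_(d1 + d2))
  (h : 'rV[R]_(d1 + d2) -> R) (gh : 'rV[R]_(d1 + d2) -> 'rV[R]_(d1 + d2))
  (K Lh Lg : R) (gamma : nat -> R) (Xs Ys : nat -> 'rV[R]_(d1 + d2)) :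
  is_norm nrm ->
  compact X1 -> convex_set X1 -> compact X2 -> convex_set X2 ->
  (* f is continuously differentiable and g = (grad_{x1} f, - grad_{x2} f) *)
  (forall x, prodset X1 X2 x -> differentiable f x) ->
  {within prodset X1 X2, continuous g} ->
  (forall x, prodset X1 X2 x -> forall v1 v2,
     pair (g x) (row_mx v1 v2) = 'd f x (row_mx v1 0) - 'd f x (row_mx 0 v2)) ->
  (* h: differentiable, gradient gh, K-strongly convex, Lh-Lipschitz gradient *)
  (forall x, prodset X1 X2 x -> differentiable h x) ->
  (forall x, prodset X1 X2 x -> forall v, pair (gh x) v = 'd h x v) ->
  0 < K ->
  (forall x x', prodset X1 X2 x -> prodset X1 X2 x' ->
     K * nrm (x - x') ^+ 2 <= pair (gh x - gh x') (x - x')) ->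
  (forall x x', prodset X1 X2 x -> prodset X1 X2 x' ->
     dnorm nrm (gh x - gh x') <= Lh * nrm (x - x')) ->
  (* Bregman reciprocity *)
  (forall p (u : nat -> 'rV[R]_(d1 + d2)), prodset X1 X2 p ->
     (forall n, prodset X1 X2 (u n)) -> u @ \oo --> p ->
     (fun n => bregman h gh p (u n)) @ \oo --> 0) ->
  (* coherence *)
  (forall x, is_SVI (prodset X1 X2) g x -> is_saddle X1 X2 f x) ->
  (exists p, is_saddle X1 X2 f p /\ is_MVI (prodset X1 X2) g p) ->
  (exists eps0 : R, 0 < eps0 /\
     forall xs, is_saddle X1 X2 f xs -> forall x, prodset X1 X2 x ->
       bregman h gh xs x <= eps0 -> 0 <= pair (g x) (x - xs)) ->
  (* g is Lg-Lipschitz *)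
  0 <= Lg ->
  (forall x x', prodset X1 X2 x -> prodset X1 X2 x' ->
     dnorm nrm (g x - g x') <= Lg * nrm (x - x')) ->
  (* step sizes: 0 < lim gamma <= sup gamma < K / Lg *)
  (exists ginf : R, gamma @ \oo --> ginf /\ 0 < ginf) ->
  (exists b : R, (forall n, gamma n <= b) /\ b * Lg < K) ->
  (* optimistic mirror descent *)
  prodset X1 X2 (Xs 0%N) ->
  (forall n, is_prox (prodset X1 X2) h gh (Xs n) (- (gamma n *: g (Xs n))) (Ys n)) ->
  (forall n, is_prox (prodset X1 X2) h gh (Xs n) (- (gamma n *: g (Ys n))) (Xs n.+1)) ->
  exists xs, is_saddle X1 X2 f xs /\ Xs @ \oo --> xs /\
    exists n0, forall n, (n0 <= n)%N -> bregman h gh xs (Xs n.+1) <= bregman h gh xs (Xs n).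
Proof.
move=> Hn cX1 convX1 cX2 convX2 fd gc gdef hd hg K0 hK hL recip coh1
  [p [_ [Sp MVIp]]] [eps0 [eps0p coh3]] Lg0 gL [ginf [gcv ginf0]] [b [gb bLg]] SX0 HY HX.
have HS : forall a c (t : R), prodset X1 X2 a -> prodset X1 X2 c -> 0 <= t -> t <= 1 ->
    prodset X1 X2 (c + t *: (a - c)).
  move=> a c t [Xa1 Xa2] [Xc1 Xc2] t0 t1; split.
    by rewrite linearD linearZ linearB /=; exact: conv_ok.
  by rewrite linearD linearZ linearB /=; exact: conv_ok.
have cS := @prod_compact R d1 d2 X1 X2 cX1 cX2.
have coh1' : forall x, prodset X1 X2 x ->
    (forall u, prodset X1 X2 u -> 0 <= pair (g x) (u - x)) -> is_saddle X1 X2 f x.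
  by move=> x Sx H; apply: coh1; split.
exact: (main_res Hn HS cS hd hg hL K0 hK Lg0 gL coh1' Sp MVIp eps0p coh3 gcv ginf0 gb bLg SX0 HY HX).
Qed.
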